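(* Let $(Y,S,\gamma)$ be a deterministic machine with update function $f\colon Y\times S\to Y$ (so $\gamma(\cdot\mid y,s)=\delta_{f(y,s)}$), and let $(H,\psi_H,\kappa)$ be a consistent Bayesian filtering interpretation of $\gamma$. Fix $n\ge 1$. For $y\in Y$ let $\psi_{S^n,H_n}(\cdot\mid y)\in P(S^n\times H)$ be the joint law of $((s_1,\dots,s_n),h_n)$ under the process: $h_0\sim\psi_H(\cdot\mid y)$ and, for $k=1,\dots,n$, $(h_k,s_k)\sim\kappa(\cdot\mid h_{k-1})$ (each step conditionally on the previous hidden state). Let $\psi_{S^n}(\cdot\mid y)$ be its marginal on $S^n$, and let $f^n\colon Y\times S^n\to Y$ be the iterated update $f^n(y,(s_1,\dots,s_n))=f(\cdots f(f(y,s_1),s_2)\cdots,s_n)$. Then for every $y\in Y$ and all measurable $A\subseteq S^n$, $C\subseteq H$, $$\psi_{S^n,H_n}(A\times C\mid y)=\int_A\psi_H\big(C\mid f^n(y,\mathbf{s})\big)\,\psi_{S^n}(d\mathbf{s}\mid y),$$ i.e. the kernel $(y,\mathbf{s})\mapsto\psi_H(\cdot\mid f^n(y,\mathbf{s}))$ is a conditional (disintegration) of $\psi_{S^n,H_n}$ with respect to $S^n$.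
   Context: All measurable spaces are standard Borel; $P(X)$ denotes probability measures on $X$; a Markov kernel $k\colon X\to P(Z)$ is a measurable map, written $k(E\mid x)$. A machine $(Y,S,\gamma)$ consists of measurable spaces $Y,S$ and a Markov kernel $\gamma\colon Y\times S\to P(Y)$. Given a measurable space $H$ and Markov kernels $\psi_H\colon Y\to P(H)$, $\kappa\colon H\to P(H\times S)$, define $\psi_{S,H'}(E\mid y)=\int_H\kappa(E\mid h)\,\psi_H(dh\mid y)$ for measurable $E\subseteq H\times S$, and $\psi_S(A\mid y)=\psi_{S,H'}(H\times A\mid y)$. The triple $(H,\psi_H,\kappa)$ is a consistent Bayesian filtering interpretation of $\gamma$ if for all $y\in Y$ and measurable $C\subseteq H$, $A\subseteq S$, $B\subseteq Y$: $$\int_{C\times A}\gamma(B\mid y,s)\,\psi_{S,H'}(dh',ds\mid y)=\int_A\int_B\psi_H(C\mid y')\,\gamma(dy'\mid y,s)\,\psi_S(ds\mid y).$$ *)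

(* Defs.v *)
From HB Require Import structures.
From mathcomp Require Import all_boot all_order all_algebra.
From mathcomp Require Import all_classical all_reals all_analysis.
Set Implicit Arguments. Unset Strict Implicit. Unset Printing Implicit Defensive.

Definition iter_update {Y S : Type} (f : Y * S -> Y) (y : Y) (ss : seq S) : Y :=
  foldl (fun y' s => f (y', s)) y ss.

(* Main.v *)
Require Import Defs.
From HB Require Import structures.
From mathcomp Require Import all_boot all_order all_algebra.
From mathcomp Require Import all_classical all_reals all_analysis.
From mathcomp Require Import measurable_realfun.
Set Implicit Arguments. Unset Strict Implicit. Unset Printing Implicit Defensive.
Import Order.TTheory GRing.Theory Num.Theory.
Local Open Scope classical_set_scope.
Local Open Scope ring_scope.
Local Open Scope ereal_scope.
Section kpre.
Context (R : realType) d dY dZ (T : measurableType d) (Y : measurableType dY)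
  (Z : measurableType dZ) (K : R.-pker Y ~> Z) (g : T -> Y).
Definition kpre (mg : measurable_fun [set: T] g) (t : T) :
  {measure set Z -> \bar R} := K (g t).
Hypothesis mg : measurable_fun [set: T] g.
Let mkpre U : measurable U -> measurable_fun [set: T] (fun t => kpre mg t U).
Proof. by move=> mU; exact: (measurableT_comp (measurable_kernel K U mU) mg). Qed.
HB.instance Definition _ := isKernel.Build _ _ _ _ _ (kpre mg) mkpre.
Let kpre_prob t : kpre mg t [set: Z] = 1.
Proof. by rewrite /kpre prob_kernel. Qed.
HB.instance Definition _ := Kernel_isProbability.Build _ _ _ _ _ (kpre mg) kpre_prob.

Lemma kpre_sec (F : set (T * Z)) : measurable F ->
  measurable_fun [set: T] (fun t => K (g t) (xsection F t)).
Proof.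
move=> mF.
have := @measurable_fun_xsection_finite_kernel _ _ _ _ R (kpre mg) F.
by rewrite inE; apply.
Qed.

Lemma kpre_int (h : T * Z -> \bar R) : (forall z, 0 <= h z) ->
  measurable_fun [set: T * Z] h ->
  measurable_fun [set: T] (fun t => \int[K (g t)]_z h (t, z)).
Proof.
move=> h0 mh.
exact: (measurable_fun_integral_finite_kernel h (kpre mg)).
Qed.
End kpre.
Section transfer.
Context (R : realType) d1 d2 d3 (T1 : measurableType d1) (T2 : measurableType d2)
  (Z : measurableType d3).
Variables (m : {measure set Z -> \bar R}) (mu : {measure set T1 -> \bar R})
  (rho : T1 -> {measure set T2 -> \bar R}) (phi : T1 * T2 -> Z).
Hypothesis mphi : measurable_fun [set: T1 * T2] phi.
Hypothesis hrho : forall F, measurable F ->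
  measurable_fun [set: T1] (fun t => rho t (xsection F t)).
Hypothesis hm : forall A, measurable A ->
  m A = \int[mu]_t rho t (xsection (phi @^-1` A) t).

Import HBNNSimple.

Lemma rho_int (h : T1 * T2 -> \bar R) : (forall z, 0 <= h z) ->
  measurable_fun [set: T1 * T2] h ->
  measurable_fun [set: T1] (fun t => \int[rho t]_z h (t, z)).
Proof.
move=> h0 mh.
pose h_ := nnsfun_approx measurableT mh.
apply: (@measurable_fun_xsection_integral _ _ _ _ _ h rho h_).
- by move=> a b ab; exact/nd_nnsfun_approx.
- by move=> z; exact/cvg_nnsfun_approx.
- by move=> n r; apply: hrho.
Qed.

Lemma ind_int t A : measurable A ->
  \int[rho t]_s (\1_A (phi (t, s)))%:E = rho t (xsection (phi @^-1` A) t).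
Proof.
move=> mA.
have mX : measurable (xsection (phi @^-1` A) t).
  apply: measurable_xsection; rewrite -[X in measurable X]setTI; exact: mphi.
rewrite -[xsection _ t]setIT -integral_indic//; apply: eq_integral => s _.
by rewrite !indicE mem_xsection.
Qed.

Let transfer_nnsfun (f : {nnsfun Z >-> R}) :
  \int[m]_z (f z)%:E = \int[mu]_t \int[rho t]_s (f (phi (t, s)))%:E.
Proof.
under [in LHS]eq_integral do rewrite fimfunE -fsumEFin//.
rewrite ge0_integral_fsum//; last 2 first.
  - by move=> r; exact/measurable_EFinP/measurableT_comp.
  - by move=> r z _; rewrite EFinM nnfun_muleindic_ge0.
under [in RHS]eq_integral.
  move=> t _.
  under eq_integral.
    by move=> s _; rewrite fimfunE -fsumEFin//; over.
  rewrite /= ge0_integral_fsum//; last 2 first.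
    - move=> r; apply/measurable_EFinP; apply: measurable_funM => //.
      apply: (@measurableT_comp _ _ _ _ _ _ (\1_(f @^-1` [set r]) : Z -> R)).
        exact: measurable_indic.
      exact: measurableT_comp mphi (pair1_measurable t).
    - by move=> r z _; rewrite EFinM nnfun_muleindic_ge0.
  under eq_fsbigr.
    move=> r _.
    have -> : \int[rho t]_x (r * \1_(f @^-1` [set r]) (phi (t, x)))%:E =
        r%:E * rho t (xsection (phi @^-1` (f @^-1` [set r])) t).
      have [r0|r0] := leP 0%R r.
        under eq_integral do rewrite EFinM.
        rewrite ge0_integralZl//; first by rewrite ind_int//.
        apply/measurable_EFinP.
        apply: (@measurableT_comp _ _ _ _ _ _ (\1_(f @^-1` [set r]) : Z -> R)).
          exact: measurable_indic.
        exact: measurableT_comp mphi (pair1_measurable t).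
      rewrite integral0_eq; last by move=> s _; rewrite preimage_nnfun0// indic0 mulr0.
      by rewrite preimage_nnfun0// preimage_set0 xsection0 measure0 mule0.
    over.
  over.
rewrite /= ge0_integral_fsum//; last 2 first.
  - move=> r; apply: measurable_funeM.
    apply: hrho; rewrite -[X in measurable X]setTI; exact: mphi.
  - move=> r t _; have [r0|r0] := leP 0%R r.
      by rewrite mule_ge0.
    by rewrite preimage_nnfun0// preimage_set0 xsection0 measure0 mule0.
apply: eq_fsbigr => r _.
rewrite (integralZl_indic _ (fun r => f @^-1` [set r]))//; last first.
  exact: preimage_nnfun0.
rewrite integral_indic// setIT hm//.
have [r0|r0] := leP 0%R r.
  rewrite ge0_integralZl//.
  apply: hrho; rewrite -[X in measurable X]setTI; exact: mphi.
rewrite [RHS]integral0_eq; last first.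
  by move=> t _; rewrite preimage_nnfun0// preimage_set0 xsection0 measure0 mule0.
rewrite integral0_eq ?mule0//.
by move=> t _; rewrite preimage_nnfun0// preimage_set0 xsection0 measure0.
Qed.

Lemma transfer (f : Z -> \bar R) : (forall z, 0 <= f z) ->
  measurable_fun [set: Z] f ->
  \int[m]_z f z = \int[mu]_t \int[rho t]_s f (phi (t, s)).
Proof.
move=> f0 mf.
pose f_ := nnsfun_approx measurableT mf.
have mfn n : measurable_fun [set: T1 * T2] (fun p => (f_ n (phi p))%:E).
  by apply/measurable_EFinP; exact: measurableT_comp.
transitivity (\int[m]_z (lim ((f_ n z)%:E @[n --> \oo]))).
  by apply/eq_integral => z _; apply/esym/cvg_lim => //=; exact: cvg_nnsfun_approx.
rewrite monotone_convergence//; last 3 first.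
  by move=> n; exact/measurable_EFinP.
  by move=> n z _; rewrite lee_fin.
  by move=> z _ a b ab; rewrite lee_fin; exact/lefP/nd_nnsfun_approx.
rewrite (_ : (fun _ => _) =
    (fun n => \int[mu]_t (\int[rho t]_s (f_ n (phi (t, s)))%:E)))//; last first.
  by apply/funext => n; rewrite transfer_nnsfun.
transitivity (\int[mu]_t lim ((\int[rho t]_s (f_ n (phi (t, s)))%:E) @[n --> \oo])).
  rewrite -monotone_convergence//; last 3 first.
  - move=> n; apply: (rho_int (h := fun p => (f_ n (phi p))%:E)) => //.
    by move=> z; rewrite lee_fin.
  - by move=> n t _; apply: integral_ge0 => // s _; rewrite lee_fin.
  - move=> t _ a b ab; apply: ge0_le_integral => //.
    + by move=> s _; rewrite lee_fin.
    + exact: (measurableT_comp (mfn a) (pair1_measurable t)).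
    + exact: (measurableT_comp (mfn b) (pair1_measurable t)).
    + by move=> s _; rewrite lee_fin; exact/lefP/nd_nnsfun_approx.
apply: eq_integral => t _; rewrite -monotone_convergence//; last 3 first.
  - by move=> n; exact: (measurableT_comp (mfn n) (pair1_measurable t)).
  - by move=> n s _; rewrite lee_fin.
  - by move=> s _ a b ab; rewrite lee_fin; exact/lefP/nd_nnsfun_approx.
by apply: eq_integral => s _; apply/cvg_lim => //; exact: cvg_nnsfun_approx.
Qed.
End transfer.
Section mprod.
Context (R : realType) d1 d2 (T1 : measurableType d1) (T2 : measurableType d2).
Variables (mu : {measure set T1 -> \bar R}) (rho : T1 -> {measure set T2 -> \bar R}).
Definition mprodf (hr : forall F, measurable F ->
  measurable_fun [set: T1] (fun t => rho t (xsection F t))) (E : set (T1 * T2)) :=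
  \int[mu]_t rho t (xsection E t).
Hypothesis hr : forall F, measurable F ->
  measurable_fun [set: T1] (fun t => rho t (xsection F t)).

Let mp0 : mprodf hr set0 = 0.
Proof.
rewrite /mprodf; under eq_integral do rewrite xsection0 measure0.
exact: integral0.
Qed.

Let mp_ge0 E : 0 <= mprodf hr E.
Proof. exact: integral_ge0. Qed.

Let mp_sa : semi_sigma_additive (mprodf hr).
Proof.
move=> F mF tF mUF.
have -> : mprodf hr (\bigcup_n F n) = \sum_(0 <= n <oo) mprodf hr (F n).
  rewrite /mprodf -integral_nneseries//; last by move=> n; exact: hr.
  apply: eq_integral => t _; rewrite xsection_bigcup.
  apply/esym/cvg_lim => //; apply: measure_semi_sigma_additive.
  - by move=> n; exact: measurable_xsection.
  - exact: trivIset_xsection.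
  - by rewrite -xsection_bigcup; exact: measurable_xsection.
exact: is_cvg_nneseries.
Qed.

HB.instance Definition _ := isMeasure.Build _ _ _ (mprodf hr) mp0 mp_ge0 mp_sa.

Definition mprod : {measure set (T1 * T2) -> \bar R} := mprodf hr.

Lemma mprodX A B : measurable A ->
  mprodf hr (A `*` B) = \int[mu]_(t in A) rho t B.
Proof.
move=> mA; rewrite /mprodf [RHS]integral_mkcond; apply: eq_integral => t _.
rewrite patchE; case: ifPn => tA; first by rewrite in_xsectionX.
by rewrite notin_xsectionX// measure0.
Qed.

Lemma mprod_unique (m : {measure set (T1 * T2) -> \bar R}) :
  (forall A B, measurable A -> measurable B ->
     m (A `*` B) = \int[mu]_(t in A) rho t B) ->
  m setT < +oo ->
  forall E, measurable E -> m E = mprodf hr E.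
Proof.
move=> mE mT E mEE.
pose C : set (set (T1 * T2)) :=
  [set C | exists A, measurable A /\ exists B, measurable B /\ C = A `*` B].
have CI : setI_closed C.
  move=> /= _ _ [X1 [mX1 [X2 [mX2 ->]]]] [Y1 [mY1 [Y2 [mY2 ->]]]].
  rewrite -setXI; exists (X1 `&` Y1); split; first exact: measurableI.
  by exists (X2 `&` Y2); split => //; exact: measurableI.
apply: (@measure_unique _ _ _ C (fun _ => setT) _ CI _ _ m mprod) => //.
- rewrite measurable_prod_measurableType //; congr (<<s _ >>).
  rewrite predeqE; split => [[A mA [B mB <-]]|[A [mA [B [mB ->]]]]].
    by exists A; split => //; exists B.
  by exists A => //; exists B.
- by move=> _; exists setT; split => //; exists setT; split => //; rewrite setXTT.
- by rewrite bigcup_const.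
- move=> _ [A [mA [B [mB ->]]]]; rewrite mE//.
  by rewrite /mprod/= mprodX.
Qed.
End mprod.
Section tuple_meas.
Context dY dS (Y : measurableType dY) (S : measurableType dS).

Lemma measurable_rc k :
  measurable_fun [set: k.-tuple S * S] (fun p => [tuple of rcons p.1 p.2]).
Proof.
apply/measurable_fun_tnthP => i /=.
have [ik|ik] := ltnP i k.
- rewrite (_ : _ \o _ = (fun p => tnth p.1 (Ordinal ik))).
    exact: measurableT_comp (measurable_tnth _) measurable_fst.
  apply/funext => p /=; rewrite (tnth_nth p.2) /= nth_rcons size_tuple ik.
  by rewrite (tnth_nth p.2).
- have ik' : val i = k by apply/eqP; rewrite eqn_leq ik andbT -ltnS ltn_ord.
  rewrite (_ : _ \o _ = snd) //; apply/funext => p /=.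
  by rewrite (tnth_nth p.2) /= nth_rcons size_tuple ik' ltnn eqxx.
Qed.

Variable f : Y * S -> Y.
Hypothesis mf : measurable_fun [set: Y * S] f.

Lemma measurable_iter k :
  measurable_fun [set: Y * k.-tuple S] (fun p => iter_update f p.1 (tval p.2)).
Proof.
elim: k => [|k IH].
  rewrite (_ : (fun _ => _) = fst) //; apply/funext => -[y t] /=.
  by rewrite tuple0.
rewrite (_ : (fun _ => _) = (fun p : Y * k.-tuple S => iter_update f p.1 (tval p.2)) \o
   (fun p : Y * k.+1.-tuple S => (f (p.1, thead p.2), [tuple of behead p.2]))).
  apply: measurableT_comp IH _; apply/measurable_fun_pairP; split => /=.
    apply: (measurableT_comp mf (g := fun p : Y * k.+1.-tuple S => (p.1, thead p.2))).
    apply/measurable_fun_pairP; split; first exact: measurable_fst.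
    exact: (measurableT_comp (@measurable_tnth _ S k.+1 ord0) measurable_snd).
  have := (measurableT_comp (@measurable_behead _ S k) (@measurable_snd _ _ Y (k.+1.-tuple S))).
  exact.
apply/funext => -[y t] /=.
by rewrite [in LHS](tuple_eta t).
Qed.

Lemma measurable_iter1 k y :
  measurable_fun [set: k.-tuple S] (fun t => iter_update f y (tval t)).
Proof.
have := measurableT_comp (@measurable_iter k) (pair1_measurable (T2 := k.-tuple S) y).
exact.
Qed.

End tuple_meas.
Section pf.
Context (R : realType) d1 d2 (T1 : measurableType d1) (T2 : measurableType d2).
Definition marg (m : {measure set (T1*T2) -> \bar R}) : {measure set T1 -> \bar R}.
refine (pushforward m fst : {measure set T1 -> \bar R}).
exact: measurable_fst.
Defined.
Lemma margE m A : marg m A = m (A `*` setT).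
Proof. by rewrite setXT. Qed.
Definition mswap (m : {measure set (T1*T2) -> \bar R}) : {measure set (T2*T1) -> \bar R}.
refine (pushforward m (fun p : T1 * T2 => (p.2, p.1)) : {measure set (T2*T1) -> \bar R}).
exact: measurable_fun_pair.
Defined.
Lemma mswapE m F : mswap m F = m [set p | F (p.2, p.1)].
Proof. by []. Qed.
End pf.

Lemma mpre d1 d2 (T1 : measurableType d1) (T2 : measurableType d2) (g : T1 -> T2) E :
  measurable_fun [set: T1] g -> measurable E -> measurable (g @^-1` E).
Proof. by move=> mg mE; rewrite -[X in measurable X]setTI; exact: mg. Qed.
Unset Implicit Arguments.
Theorem mainTheorem2
  (R : realType) (dY dS dH : measure_display)
  (Y : measurableType dY) (S : measurableType dS) (H : measurableType dH)
  (* the machine (Y,S,gamma), deterministic with update function f *)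
  (gamma : R.-pker (Y * S) ~> Y) (f : Y * S -> Y)
  (mf : measurable_fun [set: Y * S] f)
  (gamma_det : forall (y : Y) (s : S) (B : set Y), measurable B ->
     gamma (y, s) B = \d_(f (y, s)) B)
  (* the interpretation (H, psiH, kappa) *)
  (psiH : R.-pker Y ~> H) (kappa : R.-pker H ~> (H * S)%type)
  (* psi_{S,H'} and psi_S *)
  (psiSH : Y -> {measure set (H * S) -> \bar R})
  (psiSH_def : forall (y : Y) (E : set (H * S)), measurable E ->
     psiSH y E = \int[psiH y]_h kappa h E)
  (psiS : Y -> {measure set S -> \bar R})
  (psiS_def : forall (y : Y) (A : set S), measurable A ->
     psiS y A = psiSH y ([set: H] `*` A))
  (* consistency of the Bayesian filtering interpretation *)
  (consistent : forall (y : Y) (C : set H) (A : set S) (B : set Y),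
     measurable C -> measurable A -> measurable B ->
     \int[psiSH y]_(p in C `*` A) gamma (y, p.2) B =
     \int[psiS y]_(s in A) \int[gamma (y, s)]_(y' in B) psiH y' C)
  (* the joint laws psi_{S^k,H_k} of ((s_1,...,s_k), h_k) *)
  (psiSnH : forall k : nat, Y -> {measure set (k.-tuple S * H) -> \bar R})
  (psiSnH_0 : forall (y : Y) (E : set (0.-tuple S * H)), measurable E ->
     psiSnH 0%N y E = psiH y [set h | E ([tuple], h)])
  (psiSnH_S : forall (k : nat) (y : Y) (E : set (k.+1.-tuple S * H)),
     measurable E ->
     psiSnH k.+1 y E =
     \int[psiSnH k y]_p kappa p.2 [set q | E ([tuple of rcons p.1 q.2], q.1)])
  (n : nat) (n_ge1 : (0 < n)%N)
  (* the marginal psi_{S^n} *)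
  (psiSn : Y -> {measure set (n.-tuple S) -> \bar R})
  (psiSn_def : forall (y : Y) (A : set (n.-tuple S)), measurable A ->
     psiSn y A = psiSnH n y (A `*` [set: H])) :
  forall (y : Y) (A : set (n.-tuple S)) (C : set H),
    measurable A -> measurable C ->
    psiSnH n y (A `*` C) =
    \int[psiSn y]_(ss in A) psiH (iter_update f y (tval ss)) C.
Proof.
move=> y A C mA mC.
have psiH1 z : psiH z setT = 1 by exact: prob_kernel.
have kappa1 h : kappa h setT = 1 by exact: prob_kernel.
have gamma1 p : gamma p setT = 1 by exact: prob_kernel.
have mfz z : measurable_fun [set: S] (fun s => f (z, s)).
  have := measurableT_comp mf (pair1_measurable (T2 := S) z); exact.
have OS : forall z (F : set (S * H)), measurable F ->
    psiSH z [set p | F (p.2, p.1)] = \int[psiS z]_s psiH (f (z, s)) (xsection F s).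
  move=> z F mF.
  have hr := fun F (mF : measurable F) => kpre_sec psiH (mfz z) mF.
  have E1 : forall A' B, measurable A' -> measurable B ->
      mswap (psiSH z) (A' `*` B) = \int[psiS z]_(t in A') psiH (f (z, t)) B.
    move=> A' B mA' mB; rewrite mswapE.
    have -> : [set p : H * S | (A' `*` B) (p.2, p.1)] = B `*` A'.
      by apply/seteqP; split => -[a b] [].
    transitivity (\int[psiSH z]_(p in B `*` A') gamma (z, p.2) setT).
      rewrite (eq_integral (cst 1)); last by move=> p _; rewrite gamma1.
      by rewrite integral_cst ?mul1e//; exact: measurableX.
    rewrite consistent//; apply: eq_integral => s _.
    rewrite (eq_measure_integral (\d_(f (z, s)))); last first.
      by move=> U mU _; rewrite gamma_det.
    rewrite integral_dirac//; last exact: measurable_kernel.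
    by rewrite diracT mul1e.
  have E2 : mswap (psiSH z) setT < +oo.
    rewrite mswapE.
    have -> : [set p : H * S | [set: S * H] (p.2, p.1)] = setT by [].
    rewrite psiSH_def// (eq_integral (cst 1)); last by move=> h _; rewrite kappa1.
    by rewrite integral_cst// mul1e psiH1 ltry.
  have := @mprod_unique R _ _ S H (psiS z) (fun s => psiH (f (z, s))) hr
    (mswap (psiSH z)) E1 E2 F mF.
  by rewrite mswapE.
pose x := fun k (t : k.-tuple S) => iter_update f y (tval t).
have hx : forall k, measurable_fun [set: k.-tuple S] (x k).
  by move=> k; exact: measurable_iter1.
have P : forall k (E : set (k.-tuple S * H)), measurable E ->
    psiSnH k y E = \int[marg (psiSnH k y)]_t psiH (x k t) (xsection E t).
  elim => [|k IH] E mE.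
    rewrite psiSnH_0//.
    rewrite (eq_integral (cst (psiH y (xsection E [tuple])))); last first.
      by move=> t _; rewrite (tuple0 t).
    rewrite integral_cst// margE psiSnH_0; last exact: measurableX.
    rewrite [X in _ * psiH y X](_ : _ = setT); last by apply/seteqP; split.
    rewrite psiH1 mule1; congr (psiH y _).
    by apply/seteqP; split => h; rewrite /xsection /= inE.
  have hsec := fun F (mF : measurable F) => kpre_sec psiH (hx k) mF.
  have mrc := @measurable_rc _ S k.
  have dag : forall E', measurable E' -> psiSnH k.+1 y E' =
      \int[marg (psiSnH k y)]_t \int[psiS (x k t)]_s
         psiH (x k.+1 [tuple of rcons t s]) (xsection E' [tuple of rcons t s]).
    move=> E' mE'.
    rewrite psiSnH_S//.
    pose Et : set ((k.-tuple S * H) * (H * S)) :=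
      [set pq : (k.-tuple S * H) * (H * S) | E' ([tuple of rcons pq.1.1 pq.2.2], pq.2.1)].
    have mEt : measurable Et.
      apply: mpre mE'; apply/measurable_fun_pairP; split => /=.
        have -> : fst \o (fun pq : (k.-tuple S * H) * (H * S) =>
              ([tuple of rcons pq.1.1 pq.2.2], pq.2.1)) =
            (fun p : k.-tuple S * S => [tuple of rcons p.1 p.2]) \o
            (fun pq : (k.-tuple S * H) * (H * S) => (pq.1.1, pq.2.2)) by [].
        apply: measurableT_comp mrc _; apply/measurable_fun_pairP; split.
          exact: (measurableT_comp measurable_fst measurable_fst).
        exact: (measurableT_comp measurable_snd measurable_snd).
      exact: (measurableT_comp measurable_fst measurable_snd).
    rewrite (transfer (m := psiSnH k y) (mu := marg (psiSnH k y))
      (rho := fun t => psiH (x k t)) (phi := id) (@measurable_id _ _ _) hsec IH); last 2 first.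
    - by move=> p; exact: measure_ge0.
    - rewrite (_ : (fun p => _) = fun p => kappa p.2 (xsection Et p)).
        exact: (kpre_sec kappa measurable_snd mEt).
      apply/funext => p; congr (kappa p.2 _).
      by apply/seteqP; split => q; rewrite /xsection /= inE.
    apply: eq_integral => t _ /=.
    have mg : measurable_fun [set: H * S]
        (fun q : H * S => ([tuple of rcons t q.2], q.1)).
      apply/measurable_fun_pairP; split => //=.
      have -> : fst \o (fun q : H * S => ([tuple of rcons t q.2], q.1)) =
          (fun p : k.-tuple S * S => [tuple of rcons p.1 p.2]) \o (fun q : H * S => (t, q.2)) by [].
      apply: measurableT_comp mrc _.
      exact: (measurableT_comp (pair1_measurable t) measurable_snd).
    exact: measurable_fst.
    rewrite -psiSH_def; last exact: mpre mg mE'.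
    pose F : set (S * H) := [set p | E' ([tuple of rcons t p.1], p.2)].
    have mF : measurable F.
      apply: mpre mE'; apply/measurable_fun_pairP; split => //=.
      have -> : fst \o (fun q : S * H => ([tuple of rcons t q.1], q.2)) =
          (fun p : k.-tuple S * S => [tuple of rcons p.1 p.2]) \o (fun q : S * H => (t, q.1)) by [].
      apply: measurableT_comp mrc _.
      exact: (measurableT_comp (pair1_measurable t) measurable_fst).
    exact: measurable_snd.
    rewrite (_ : [set q | _] = [set p | F (p.2, p.1)]) // OS//.
    apply: eq_integral => s _; congr (psiH _ _).
      by rewrite /x /= /iter_update foldl_rcons.
  have hrho2 : forall F, measurable F ->
      measurable_fun [set: k.-tuple S] (fun t => psiS (x k t) (xsection F t)).
    move=> F mF.
    pose F' : set ((k.-tuple S * H) * (H * S)) :=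
      [set pq : (k.-tuple S * H) * (H * S) | F (pq.1.1, pq.2.2)].
    have mF' : measurable F'.
      apply: mpre mF; apply/measurable_fun_pairP; split.
        exact: (measurableT_comp measurable_fst measurable_fst).
      exact: (measurableT_comp measurable_snd measurable_snd).
    rewrite (_ : (fun t => _) = fun t => \int[psiH (x k t)]_h
        (fun th => kappa th.2 (xsection F' th)) (t, h)).
      apply: (kpre_int psiH (hx k) (h := fun th => kappa th.2 (xsection F' th))).
        by move=> th; exact: measure_ge0.
      exact: (kpre_sec kappa measurable_snd mF').
    apply/funext => t; rewrite psiS_def; last exact: measurable_xsection.
    rewrite psiSH_def; last by apply: measurableX => //; exact: measurable_xsection.
    apply: eq_integral => h _ /=; congr (kappa h _).
    rewrite /xsection; apply/seteqP; split => -[h' s] /=; rewrite !in_setE /=.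
      by case.
    by [].
  have hm2 : forall A', measurable A' -> marg (psiSnH k.+1 y) A' =
      \int[marg (psiSnH k y)]_t psiS (x k t)
        (xsection ((fun p : k.-tuple S * S => [tuple of rcons p.1 p.2]) @^-1` A') t).
    move=> A' mA'; rewrite margE dag; last exact: measurableX.
    apply: eq_integral => t _.
    have mX : measurable (xsection
        ((fun p : k.-tuple S * S => [tuple of rcons p.1 p.2]) @^-1` A') t).
      by apply: measurable_xsection; exact: mpre mrc mA'.
    rewrite -[X in psiS _ X]setIT -integral_indic//.
    apply: eq_integral => s _; rewrite indicE mem_xsection.
    have -> : ((t, s) \in (fun p : k.-tuple S * S => [tuple of rcons p.1 p.2]) @^-1` A')
        = ([tuple of rcons t s] \in A').
      by apply/idP/idP; rewrite !in_setE.
    have [inA|ninA] := boolP ([tuple of rcons t s] \in A').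
      by rewrite in_xsectionX ?psiH1.
    by rewrite notin_xsectionX ?measure0.
  rewrite dag// [RHS](transfer (m := marg (psiSnH k.+1 y)) (mu := marg (psiSnH k y))
    (rho := fun t => psiS (x k t)) mrc hrho2 hm2); last 2 first.
  - by move=> u; exact: measure_ge0.
  - exact: (kpre_sec psiH (hx k.+1) mE).
  by [].
rewrite P; last exact: measurableX.
rewrite [RHS]integral_mkcond.
rewrite (eq_measure_integral (psiSn y)); last first.
  by move=> U mU _; rewrite margE psiSn_def.
apply: eq_integral => t _; rewrite patchE; case: ifPn => tA.
  by rewrite in_xsectionX.
by rewrite notin_xsectionX// measure0.
Qed.
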